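(* Let $S$ be a $\phi$-calibrated surrogate with potential $h:\mathcal{D}\to\mathbb{R}$, assume $\psi$ is injective, and suppose $h$ is $(1/\beta)$-strongly convex on $\mathcal{D}$ with respect to $\|\cdot\|_2$. Then for all $\varepsilon\ge0$, $$\zeta_h(\varepsilon)\ge\frac{\varepsilon^2}{2\beta\max_{z\neq z'}\|\psi(z)-\psi(z')\|_2^2}.$$
   Context: $\mathcal{Y},\mathcal{Z}$ finite sets ($|\mathcal{Z}|\ge2$), $\mathcal{H}$ a finite-dimensional real Euclidean space, $\psi:\mathcal{Z}\to\mathcal{H}$, $\phi:\mathcal{Y}\to\mathcal{H}$, $c\in\mathbb{R}$, $L(z,y)=\langle\psi(z),\phi(y)\rangle+c$. $\mu(q)=\sum_y q(y)\phi(y)$, $\mathcal{M}=\operatorname{hull}(\phi(\mathcal{Y}))$, $\ell(z,q)=\mathbb{E}_{Y\sim q}L(z,Y)$, $\delta\ell(z,q)=\ell(z,q)-\min_{z'}\ell(z',q)$. $z(u)$ is an element of $\arg\min_z\langle\psi(z),u\rangle$ (fixed tie-breaking). For $S:\mathcal{V}\times\mathcal{Y}\to\mathbb{R}$: $s(v,q)=\mathbb{E}_{Y\sim q}S(v,Y)$, $\delta s(v,q)=s(v,q)-\inf_{v'}s(v',q)$. $D_h(u',u)=h(u')-h(u)-\langle u'-u,\nabla h(u)\rangle$. $S$ is $\phi$-calibrated with potential $h$ if there exist convex $\mathcal{D}\supseteq\mathcal{M}$, strictly convex differentiable $h:\mathcal{D}\to\mathbb{R}$ and continuous bijection $t:\mathcal{D}\to\mathcal{V}$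 with $\delta s(v,q)=D_h(\mu(q),t^{-1}(v))$ for all $v,q$. Decoding $d(v)=z(t^{-1}(v))$; $\zeta_h(\varepsilon)=\inf\{\delta s(v,q):\delta\ell(d(v),q)\ge\varepsilon\}$. Strong convexity: $h(u)\ge h(v)+\langle u-v,\nabla h(v)\rangle+\frac1{2\beta}\|u-v\|_2^2$ for $u,v\in\mathcal{D}$. *)

(* Defs.v *)
From mathcomp Require Import all_boot.
From Stdlib Require Import Reals.
Set Implicit Arguments. Unset Strict Implicit. Unset Printing Implicit Defensive.
Open Scope R_scope.

Definition rsum (T : finType) (f : T -> R) : R := \big[Rplus/0]_(i : T) f i.

(* Minimum of a real function over a finite type (meaningful when T is nonempty;
   default 0 when T is empty). *)
Definition rmin (T : finType) (f : T -> R) : R :=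
  match enum T with
  | [::] => 0
  | x :: _ => \big[Rmin/f x]_(i : T) f i
  end.

Definition vec (n : nat) := 'I_n -> R.
Definition inner (n : nat) (u v : vec n) : R := rsum (fun i => u i * v i).
Definition norm2sq (n : nat) (u : vec n) : R := inner u u.
Definition norm2 (n : nat) (u : vec n) : R := sqrt (norm2sq u).
Definition vadd (n : nat) (u v : vec n) : vec n := fun i => u i + v i.
Definition vsub (n : nat) (u v : vec n) : vec n := fun i => u i - v i.
Definition vscale (n : nat) (a : R) (u : vec n) : vec n := fun i => a * u i.

Definition is_dist (Y : finType) (q : Y -> R) : Prop :=
  (forall y, 0 <= q y) /\ rsum q = 1.

Definition mu (Y : finType) (n : nat) (phi : Y -> vec n) (q : Y -> R) : vec n :=
  fun i => rsum (fun y => q y * phi y i).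

Definition in_hull (Y : finType) (n : nat) (phi : Y -> vec n) (u : vec n) : Prop :=
  exists q, is_dist q /\ u = mu phi q.

Definition Lloss (Y Z : finType) (n : nat) (psi : Z -> vec n) (phi : Y -> vec n)
  (c : R) (z : Z) (y : Y) : R := inner (psi z) (phi y) + c.
Definition ell (Y Z : finType) (n : nat) (psi : Z -> vec n) (phi : Y -> vec n)
  (c : R) (z : Z) (q : Y -> R) : R := rsum (fun y => q y * Lloss psi phi c z y).
Definition dell (Y Z : finType) (n : nat) (psi : Z -> vec n) (phi : Y -> vec n)
  (c : R) (z : Z) (q : Y -> R) : R :=
  ell psi phi c z q - rmin (fun z' => ell psi phi c z' q).

(* Surrogate: expected surrogate loss and its regret.  The infimum over the
   report set V is expressed relationally (it need not be attained). *)
Definition sexp (V : Type) (Y : finType) (S : V -> Y -> R) (v : V) (q : Y -> R) : R :=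
  rsum (fun y => q y * S v y).
Definition is_inf (P : R -> Prop) (m : R) : Prop :=
  (forall x, P x -> m <= x) /\ (forall m', (forall x, P x -> m' <= x) -> m' <= m).
(* dsurr S v q x  <->  delta s(v,q) is defined (finite) and equals x. *)
Definition dsurr (V : Type) (Y : finType) (S : V -> Y -> R) (v : V) (q : Y -> R)
  (x : R) : Prop :=
  exists m, is_inf (fun w => exists v', w = sexp S v' q) m /\ x = sexp S v q - m.

Definition breg (n : nat) (h : vec n -> R) (gh : vec n -> vec n) (u' u : vec n) : R :=
  h u' - h u - inner (vsub u' u) (gh u).

Definition convex_set (n : nat) (D : vec n -> Prop) : Prop :=
  forall u v (a : R), D u -> D v -> 0 <= a <= 1 ->
    D (vadd (vscale a u) (vscale (1 - a) v)).
Definition strictly_convex_on (n : nat) (D : vec n -> Prop) (h : vec n -> R) : Prop :=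
  forall u v (a : R), D u -> D v -> u <> v -> 0 < a < 1 ->
    h (vadd (vscale a u) (vscale (1 - a) v)) < a * h u + (1 - a) * h v.
Definition differentiable_on (n : nat) (D : vec n -> Prop) (h : vec n -> R)
  (gh : vec n -> vec n) : Prop :=
  forall u, D u -> forall eps, 0 < eps -> exists del, 0 < del /\
    forall u', D u' -> norm2 (vsub u' u) < del ->
      Rabs (h u' - h u - inner (vsub u' u) (gh u)) <= eps * norm2 (vsub u' u).
Definition strongly_convex_on (n : nat) (D : vec n -> Prop) (h : vec n -> R)
  (gh : vec n -> vec n) (beta : R) : Prop :=
  forall u v, D u -> D v ->
    h u >= h v + inner (vsub u v) (gh v) + / (2 * beta) * norm2sq (vsub u v).

Definition is_topology (V : Type) (openV : (V -> Prop) -> Prop) : Prop :=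
  openV (fun _ => True) /\ openV (fun _ => False) /\
  (forall A B, openV A -> openV B -> openV (fun x => A x /\ B x)) /\
  (forall (F : (V -> Prop) -> Prop), (forall A, F A -> openV A) ->
     openV (fun x => exists A, F A /\ A x)).
Definition open_euclid (n : nat) (O : vec n -> Prop) : Prop :=
  forall u, O u -> exists r, 0 < r /\ forall w, norm2 (vsub w u) < r -> O w.
Definition continuous_on (n : nat) (V : Type) (openV : (V -> Prop) -> Prop)
  (D : vec n -> Prop) (t : vec n -> V) : Prop :=
  forall O, openV O -> exists O', open_euclid O' /\ forall u, D u -> (O (t u) <-> O' u).

Definition bij_with_inv (n : nat) (V : Type) (D : vec n -> Prop) (t : vec n -> V)
  (tinv : V -> vec n) : Prop :=
  (forall v, D (tinv v) /\ t (tinv v) = v) /\ (forall u, D u -> tinv (t u) = u).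

Definition is_argmin_sel (Z : finType) (n : nat) (psi : Z -> vec n) (zsel : vec n -> Z)
  : Prop := forall u z', inner (psi (zsel u)) u <= inner (psi z') u.

(* S is phi-calibrated with potential h (witnessed by D, gradient gh, link t). *)
Definition phi_calibrated (V : Type) (openV : (V -> Prop) -> Prop) (Y : finType)
  (n : nat) (phi : Y -> vec n) (S : V -> Y -> R) (D : vec n -> Prop)
  (h : vec n -> R) (gh : vec n -> vec n) (t : vec n -> V) (tinv : V -> vec n) : Prop :=
  convex_set D /\ (forall u, in_hull phi u -> D u) /\
  strictly_convex_on D h /\ differentiable_on D h gh /\
  continuous_on openV D t /\ bij_with_inv D t tinv /\
  (forall v q, is_dist q -> dsurr S v q (breg h gh (mu phi q) (tinv v))).

(* The set whose infimum is zeta_h(eps), with decoding d(v) = z(t^{-1}(v)). *)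
Definition zeta_set (V : Type) (Y Z : finType) (n : nat) (psi : Z -> vec n)
  (phi : Y -> vec n) (c : R) (S : V -> Y -> R) (zsel : vec n -> Z)
  (tinv : V -> vec n) (eps : R) (x : R) : Prop :=
  exists v q, is_dist q /\ dell psi phi c (zsel (tinv v)) q >= eps /\ dsurr S v q x.

(* max over z <> z' of ||psi z - psi z'||^2 (values are >= 0, so 0 is a valid seed). *)
Definition maxpsidiff (Z : finType) (n : nat) (psi : Z -> vec n) : R :=
  \big[Rmax/0]_(p : Z * Z | p.1 != p.2) norm2sq (vsub (psi p.1) (psi p.2)).

(* Main.v *)
From HB Require Import structures.
Require Import Defs.
From mathcomp Require Import all_boot.
From Stdlib Require Import Reals Lra Psatz.
Open Scope R_scope.
Set Implicit Arguments. Unset Strict Implicit.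

HB.instance Definition _ := Monoid.isComLaw.Build R 0 Rplus
  (fun a b c => esym (Rplus_assoc a b c)) Rplus_comm Rplus_0_l.

Lemma rsum_add (T : finType) (f g : T -> R) :
  rsum (fun i => f i + g i) = rsum f + rsum g.
Proof. by rewrite /rsum big_split. Qed.

Lemma rsum_scal (T : finType) k (f : T -> R) :
  rsum (fun i => k * f i) = k * rsum f.
Proof.
rewrite /rsum. symmetry. apply: (big_endo (fun x => k * x)).
- by move=> a b; rewrite Rmult_plus_distr_l.
- by rewrite Rmult_0_r.
Qed.

Lemma rsum_ext (T : finType) (f g : T -> R) :
  (forall i, f i = g i) -> rsum f = rsum g.
Proof. by move=> H; rewrite /rsum; apply: eq_bigr => i _. Qed.

Lemma rsum_ge0 (T : finType) (f : T -> R) :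
  (forall i, 0 <= f i) -> 0 <= rsum f.
Proof.
move=> H; rewrite /rsum; apply: (big_ind (fun x => 0 <= x)).
- lra.
- move=> a b; lra.
- by move=> i _.
Qed.

Lemma inner_sym n (a b : vec n) : inner a b = inner b a.
Proof. apply: rsum_ext => i; ring. Qed.

Lemma inner_sub_l n (a b w : vec n) : inner (vsub a b) w = inner a w - inner b w.
Proof.
rewrite /inner.
rewrite (@rsum_ext _ _ (fun i => a i * w i + (-1) * (b i * w i))); last first.
  by move=> i; rewrite /vsub; ring.
rewrite rsum_add rsum_scal; ring.
Qed.

Lemma inner_sub_r n (a b w : vec n) : inner w (vsub a b) = inner w a - inner w b.
Proof. by rewrite inner_sym inner_sub_l (inner_sym _ a) (inner_sym _ b). Qed.

Lemma norm2sq_ge0 n (a : vec n) : 0 <= norm2sq a.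
Proof. apply: rsum_ge0 => i; nra. Qed.

Lemma quad_expand n (a w : vec n) t :
  norm2sq (vsub w (vscale t a)) = norm2sq w - 2 * t * inner a w + t * t * norm2sq a.
Proof.
rewrite /norm2sq /inner.
rewrite (@rsum_ext _ _ (fun i => (w i * w i + (-2 * t) * (a i * w i)) + (t*t) * (a i * a i))); last first.
  by move=> i; rewrite /vsub /vscale; ring.
rewrite !rsum_add !rsum_scal; ring.
Qed.

Lemma cauchy_schwarz n (a w : vec n) :
  (inner a w)^2 <= norm2sq a * norm2sq w.
Proof.
set C := inner a w; set P := norm2sq a; set W := norm2sq w.
have HP := norm2sq_ge0 a; have HW := norm2sq_ge0 w.
have Hq : forall t, 0 <= W - 2 * t * C + t * t * P.
  by move=> t; rewrite -quad_expand; apply: norm2sq_ge0.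
fold P in HP; fold W in HW.
case: (Rle_lt_or_eq_dec 0 P HP) => HP'.
- have := Hq (C / P).
  have -> : W - 2 * (C / P) * C + C / P * (C / P) * P = (P * W - C^2) / P by field; lra.
  move=> H. have : 0 <= P * W - C^2.
    have := Rmult_le_compat_r P _ _ (Rlt_le _ _ HP') H.
    rewrite Rmult_0_l /Rdiv Rmult_assoc Rinv_l; lra.
  lra.
- rewrite -HP'.
  case: (Req_dec C 0) => HC.
  + rewrite HC; lra.
  + have := Hq ((W + 1) / (2 * C)).
    rewrite -HP'.
    have -> : W - 2 * ((W + 1) / (2 * C)) * C + (W + 1) / (2 * C) * ((W + 1) / (2 * C)) * 0 = -1
      by field.
    lra.
Qed.

Lemma ell_formula (Y Z : finType) n (psi : Z -> vec n) (phi : Y -> vec n) c z q :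
  rsum q = 1 -> ell psi phi c z q = inner (psi z) (mu phi q) + c.
Proof.
move=> Hq.
rewrite /ell /Lloss /inner /mu.
rewrite (@rsum_ext _ _ (fun y => rsum (fun i => psi z i * phi y i * q y) + c * q y)); last first.
  move=> y; rewrite Rmult_plus_distr_l -rsum_scal; congr (_ + _); last ring.
  by apply: rsum_ext => i; ring.
rewrite rsum_add rsum_scal Hq Rmult_1_r; congr (_ + _).
rewrite /rsum exchange_big /=; apply: eq_bigr => i _.
rewrite -/(rsum _) -rsum_scal; apply: rsum_ext => y; ring.
Qed.

Lemma rmin_attained (Z : finType) (f : Z -> R) : leq 1 #|Z| ->
  exists z0, rmin f = f z0.
Proof.
move=> HZ; rewrite /rmin.
case E: (enum Z) => [|x s].
  by move: HZ; rewrite cardE E.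
apply: (big_ind (fun r => exists z0, r = f z0)).
- by exists x.
- move=> a b [za ->] [zb ->]; rewrite /Rmin.
  by case: (Rle_dec (f za) (f zb)) => _; [exists za | exists zb].
- by move=> i _; exists i.
Qed.

Lemma bigmax_seq (I : eqType) (r : seq I) (P : pred I) (F : I -> R) j :
  j \in r -> P j -> F j <= \big[Rmax/0]_(i <- r | P i) F i.
Proof.
elim: r => [|a r IH] //=.
rewrite in_cons => /orP [/eqP ->|Hj] Pj; rewrite big_cons.
- rewrite Pj; apply: Rmax_l.
- case: (P a); last by apply: IH.
  apply: Rle_trans (IH Hj Pj) _; apply: Rmax_r.
Qed.

Lemma maxpsidiff_ge (Z : finType) n (psi : Z -> vec n) z z0 :
  norm2sq (vsub (psi z) (psi z0)) <= maxpsidiff psi.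
Proof.
case: (eqVneq z z0) => [->|Hne].
- have -> : norm2sq (vsub (psi z0) (psi z0)) = 0.
    rewrite /norm2sq /inner /rsum big1 // => i _; rewrite /vsub; ring.
  rewrite /maxpsidiff; apply: (big_ind (fun x => 0 <= x)).
  + lra.
  + move=> a b Ha Hb; apply: Rle_trans Ha (Rmax_l _ _).
  + by move=> i _; apply: norm2sq_ge0.
- rewrite /maxpsidiff.
  apply: (@bigmax_seq _ _ _ (fun p : Z * Z => norm2sq (vsub (psi p.1) (psi p.2))) (z, z0)).
  + by rewrite mem_index_enum.
  + by [].
Qed.

Lemma inf_unique (P : R -> Prop) m1 m2 : is_inf P m1 -> is_inf P m2 -> m1 = m2.
Proof.
move=> [H1 H1'] [H2 H2']; apply: Rle_antisym; [apply: H2' | apply: H1']; done.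
Qed.

Theorem theoremD4 (Y Z : finType) (n : nat) (psi : Z -> vec n) (phi : Y -> vec n)
  (c : R) (V : Type) (openV : (V -> Prop) -> Prop) (S : V -> Y -> R)
  (D : vec n -> Prop) (h : vec n -> R) (gh : vec n -> vec n)
  (t : vec n -> V) (tinv : V -> vec n) (zsel : vec n -> Z) (beta : R) :
  leq 2 #|Z| ->
  is_topology openV ->
  is_argmin_sel psi zsel ->
  phi_calibrated openV phi S D h gh t tinv ->
  injective psi ->
  0 < beta ->
  strongly_convex_on D h gh beta ->
  forall eps : R, 0 <= eps ->
  forall x : R, zeta_set psi phi c S zsel tinv eps x ->
    eps ^ 2 / (2 * beta * maxpsidiff psi) <= x.
Proof.
move=> H2 _ Hsel Hcal _ Hb Hsc eps He x [v [q [Hq [Hd Hx]]]].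
case: Hcal => _ [Hhull [_ [_ [_ [[Hbij _] Hds]]]]].
set u := tinv v.
have Du : D u by case: (Hbij v).
set m := mu phi q.
have Dm : D m by apply: Hhull; exists q.
have Hx' : x = breg h gh m u.
  case: (Hds v q Hq) => m2 [Hi2 ->]; case: Hx => m1 [Hi1 ->].
  by rewrite (inf_unique Hi1 Hi2).
set W := norm2sq (vsub m u).
have HW : / (2 * beta) * W <= x.
  rewrite Hx' /breg; have := Hsc m u Dm Du; rewrite /W; lra.
have H1 : leq 1 #|Z| by apply: leq_trans H2.
case: (rmin_attained (fun z' => ell psi phi c z' q) H1) => z0 Hz0.
set z := zsel u.
set a := vsub (psi z) (psi z0).
have Hdell : dell psi phi c z q = inner a m.
  rewrite /dell Hz0 !ell_formula; try by case: Hq.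
  rewrite /a /m inner_sub_l; ring.
have Hs := Hsel u z0.
set C := inner a (vsub m u).
have HC : eps <= C.
  rewrite /C inner_sub_r -Hdell.
  have : inner a u <= 0 by rewrite /a inner_sub_l; fold z in Hs; lra.
  move=> Hau; change (dell psi phi c z q >= eps) in Hd; lra.
have Hcs := cauchy_schwarz a (vsub m u).
fold C W in Hcs.
set P := norm2sq a.
fold P in Hcs.
have HPM : P <= maxpsidiff psi by apply: maxpsidiff_ge.
have HP0 : 0 <= P by apply: norm2sq_ge0.
have HW0 : 0 <= W by apply: norm2sq_ge0.
set M := maxpsidiff psi; fold M in HPM.
have Hx0 : 0 <= x.
  apply: Rle_trans HW; apply: Rmult_le_pos => //.
  apply: Rlt_le; apply: Rinv_0_lt_compat; lra.
have HW2 : W <= 2 * beta * x.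
  have := Rmult_le_compat_l (2 * beta) _ _ (ltac:(lra) : 0 <= 2 * beta) HW.
  rewrite -Rmult_assoc Rinv_r; lra.
have He2 : eps ^ 2 <= M * (2 * beta * x).
  have : eps ^ 2 <= C ^ 2 by nra.
  have : P * W <= M * W by nra.
  have : M * W <= M * (2 * beta * x) by nra.
  lra.
case: (Rle_lt_or_eq_dec 0 M (Rle_trans _ _ _ HP0 HPM)) => HM.
- apply: (Rmult_le_reg_r (2 * beta * M)); first nra.
  rewrite /Rdiv Rmult_assoc Rinv_l; nra.
- rewrite -HM Rmult_0_r /Rdiv Rinv_0 Rmult_0_r //.
Qed.
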